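(* Let $0<q<1$, $Q=1/q$. For every $n\ge2$, \[ F_n=\sum_{k=2}^n\binom nk(-1)^k\left[\frac{k-1}{Q^{k-1}-1}-\frac{k}{Q^k-1}\right], \] where $F_n$ is the expected number of letters strictly to the left of the last left-to-right maximum (i.e. of the first occurrence of the maximal letter) in a random word of length $n$.
   Context: Words $a_1\dots a_n$ have independent letters with $\mathbb P\{a_i=k\}=pq^{k-1}$, $k\ge1$, $p=1-q$. An index $i$ is a left-to-right maximum if $a_i>a_j$ for all $j<i$; the last left-to-right maximum is the index of the first occurrence of $\max_j a_j$. *)

(* Defs.v *)
From mathcomp Require Import all_boot all_order all_algebra.
From mathcomp Require Import all_classical all_reals all_analysis.
Set Implicit Arguments. Unset Strict Implicit. Unset Printing Implicit Defensive.
Import Order.TTheory GRing.Theory Num.Theory.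
Local Open Scope classical_set_scope.
Local Open Scope ring_scope.

Definition pos_word (n : nat) : set (n.-tuple nat) :=
  [set w | all (fun a => 0 < a)%N w].

(* Probability of a word: independent letters, P{a_i = k} = p q^(k-1), p = 1-q. *)
Definition word_prob (R : realType) (q : R) (n : nat) (w : n.-tuple nat) : R :=
  \prod_(a <- w) ((1 - q) * q ^+ a.-1).

(* Position (0-based) of the last left-to-right maximum, i.e. of the first
   occurrence of the maximal letter; it equals the number of letters strictly
   to its left. *)
Definition last_lrmax (n : nat) (w : n.-tuple nat) : nat :=
  index (\max_(a <- w) a)%N w.

Definition F_exp (R : realType) (q : R) (n : nat) : \bar R :=
  \esum_(w in @pos_word n) ((word_prob q w * (last_lrmax w)%:R)%:E).

(* Main.v *)
Require Import Defs.
From mathcomp Require Import all_boot all_order all_algebra.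
From mathcomp Require Import all_classical all_reals all_analysis.
From mathcomp Require Import ring lra.
Import Order.TTheory GRing.Theory Num.Theory.
Import numFieldNormedType.Exports.
Local Open Scope ring_scope.

Section Fin.
Variable R : realFieldType.
Variable q : R.

Definition wt (a : nat) : R := (1 - q) * q ^+ a.-1.
Definition Pw (s : seq nat) : R := \prod_(a <- s) wt a.
Definition Mx (s : seq nat) : nat := (\max_(a <- s) a)%N.
Definition idx (s : seq nat) : nat := index (Mx s) s.
Fixpoint words (n M : nat) : seq (seq nat) :=
  if n is n'.+1 then [seq x :: w | x <- iota 1 M, w <- words n' M] else [:: [::]].

Lemma sum_words n M (F : seq nat -> R) :
  \sum_(s <- words n.+1 M) F s = \sum_(x <- iota 1 M) \sum_(w <- words n M) F (x :: w).
Proof. by rewrite /= big_allpairs_dep. Qed.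

Lemma Mx_cons x w : Mx (x :: w) = maxn x (Mx w).
Proof. by rewrite /Mx big_cons. Qed.

Lemma idx_cons x w : idx (x :: w) = if (Mx w <= x)%N then 0%N else (idx w).+1.
Proof.
rewrite /idx Mx_cons.
case: leqP => h.
  by rewrite /= eqxx.
by rewrite /= (ltn_eqF h).
Qed.

Lemma Pw_cons x w : Pw (x :: w) = wt x * Pw w.
Proof. by rewrite /Pw big_cons. Qed.

Lemma Mx_words n M w : w \in words n M -> (Mx w <= M)%N.
Proof.
elim: n w => [|n IH] w /=.
  by rewrite inE => /eqP ->; rewrite /Mx big_nil.
case/allpairsPdep => x [w' [hx hw' ->]].
rewrite Mx_cons geq_max IH // andbT.
by move: hx; rewrite mem_iota; case/andP => _; rewrite add1n ltnS.
Qed.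

Lemma sum_wt_le k : \sum_(x <- iota 1 k) wt x = 1 - q ^+ k.
Proof.
elim: k => [|k IH]; first by rewrite big_nil expr0 subrr.
have -> : iota 1 k.+1 = iota 1 k ++ [:: k.+1].
  by rewrite -[k.+1]addn1 iotaD addn1 add1n.
rewrite big_cat /= IH big_cons big_nil addr0 /wt /=.
rewrite exprS; ring.
Qed.

Lemma sum_wt_ind M k : (k <= M)%N ->
  \sum_(x <- iota 1 M) wt x * (x <= k)%:R = 1 - q ^+ k.
Proof.
move=> kM.
rewrite -(subnKC kM) iotaD big_cat.
rewrite [X in _ + X = _]big1_seq ?addr0; last first.
  move=> x /andP[_]; rewrite mem_iota => /andP[h _].
  by rewrite leqNgt -add1n h /= mulr0.
rewrite -sum_wt_le big_seq_cond [RHS]big_seq_cond; apply: eq_bigr => x.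
rewrite mem_iota andbT => /andP[_]; rewrite add1n ltnS => ->.
by rewrite mulr1.
Qed.

Lemma sum_wt_lt M k : (k <= M.+1)%N ->
  \sum_(x <- iota 1 M) wt x * (x < k)%:R = 1 - q ^+ k.-1.
Proof.
move=> kM; rewrite -(@sum_wt_ind M); last by case: k kM.
rewrite big_seq [RHS]big_seq; apply: eq_bigr => x.
rewrite mem_iota => /andP[h _].
by case: k {kM} => [|k]; case: x h.
Qed.


Definition V (k : nat) : R := 1 - q ^+ k.
Definition om (n m : nat) : R :=
  V m ^+ n - (if m is m'.+1 then V m' ^+ n else 0).

Lemma natb_and (a b : bool) : ((a && b)%:R : R) = a%:R * b%:R.
Proof. by case: a; case: b; rewrite /= ?mulr0 ?mulr1 ?mul0r. Qed.

Lemma sum_le n M k : (k <= M)%N ->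
  \sum_(w <- words n M) Pw w * (Mx w <= k)%:R = V k ^+ n.
Proof.
move=> kM; elim: n => [|n IH].
  by rewrite /= big_cons big_nil /Pw /Mx !big_nil /= mul1r addr0 expr0.
rewrite sum_words exprS -IH /V -(@sum_wt_ind M k kM) big_distrl /=.
apply: eq_bigr => x _; rewrite big_distrr /=; apply: eq_bigr => w _.
rewrite Pw_cons Mx_cons geq_max natb_and; ring.
Qed.

Lemma eq_ind_diff (a m : nat) :
  ((a == m)%:R : R) = (a <= m)%:R - (if m is m'.+1 then (a <= m')%:R else 0).
Proof.
case: m => [|m]; first by rewrite leqn0 subr0.
case: (ltngtP a m.+1) => h.
- by rewrite -ltnS h subrr.
- by rewrite leqNgt (ltnW h) subr0.
- by rewrite h ltnn subr0.
Qed.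

Lemma sum_phi n M (phi : nat -> R) :
  \sum_(w <- words n M) Pw w * phi (Mx w) = \sum_(m < M.+1) phi m * om n m.
Proof.
transitivity (\sum_(w <- words n M) \sum_(m < M.+1) phi m * (Pw w *
   ((Mx w <= m)%:R - (if (m : nat) is m'.+1 then (Mx w <= m')%:R else 0)))).
  rewrite big_seq [RHS]big_seq; apply: eq_bigr => w hw.
  have hM : (Mx w < M.+1)%N by rewrite ltnS; apply: (@Mx_words n).
  under eq_bigr do rewrite -eq_ind_diff.
  rewrite (bigD1 (Ordinal hM)) //= eqxx mulr1 big1 ?addr0; first by ring.
  move=> i hi.
  have -> : (Mx w == i) = false.
    by apply/negbTE; apply: contra hi => /eqP h; apply/eqP/val_inj.
  by rewrite mulr0 mulr0.
rewrite exchange_big /=; apply: eq_bigr => m _.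
rewrite -big_distrr /=; congr (_ * _).
rewrite /om; case: m => [[|m] hm] /=.
  rewrite subr0; under eq_bigr do rewrite subr0.
  by apply: sum_le.
under eq_bigr do rewrite mulrBr.
rewrite sumrB !sum_le //; last by apply: ltnW.
Qed.


Definition u (m : nat) : R := 1 - q ^+ m.-1.
Fixpoint gg (n m : nat) : R :=
  if n is n'.+1 then u m * (gg n' m + om n' m) else 0.

Lemma sum_idx n M (phi : nat -> R) :
  \sum_(w <- words n M) Pw w * (idx w)%:R * phi (Mx w) =
  \sum_(m < M.+1) phi m * gg n m.
Proof.
elim: n phi => [|n IH] phi.
  rewrite /= big_cons big_nil /idx /= mulr0 mul0r add0r.
  by rewrite big1 // => i _; rewrite mulr0.
rewrite sum_words.
transitivity (\sum_(x <- iota 1 M) \sum_(w <- words n M)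
   wt x * (x < Mx w)%:R * (Pw w * ((idx w)%:R + 1) * phi (Mx w))).
  apply: eq_bigr => x _; apply: eq_bigr => w _.
  rewrite Pw_cons idx_cons Mx_cons.
  case: leqP => h.
    by rewrite !mulr0 !mul0r.
  by rewrite -addn1 natrD /= mulr1; ring.
rewrite exchange_big /=.
transitivity (\sum_(w <- words n M)
   (Pw w * ((idx w)%:R + 1) * phi (Mx w)) * u (Mx w)).
  rewrite big_seq [RHS]big_seq; apply: eq_bigr => w hw.
  rewrite /u -(@sum_wt_lt M (Mx w)); last first.
    by apply: leqW; apply: (@Mx_words n).
  rewrite big_distrr /=; apply: eq_bigr => x _; ring.
transitivity (\sum_(w <- words n M) Pw w * (idx w)%:R * (phi (Mx w) * u (Mx w))
   + \sum_(w <- words n M) Pw w * (phi (Mx w) * u (Mx w))).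
  rewrite -big_split /=; apply: eq_bigr => w _; ring.
rewrite (IH (fun m => phi m * u m)) (sum_phi n M (fun m => phi m * u m)) -big_split /=.
by apply: eq_bigr => m _ /=; ring.
Qed.


Lemma gg0 n : gg n 0 = 0.
Proof. by case: n => //= n; rewrite /u expr0 subrr mul0r. Qed.

Lemma gg_closed n m : (1 - q) * q ^+ m * gg n m.+1 =
  (1 - q ^+ m) * ((1 - q * q ^+ m) ^+ n - (1 - q ^+ m) ^+ n)
  - n%:R * (1 - q) * q ^+ m * (1 - q ^+ m) ^+ n.
Proof.
elim: n => [|n IH]; first by rewrite /= !expr0 subrr; ring.
rewrite /= /om /V /u /=.
have E : q ^+ m.+1 = q * q ^+ m by rewrite exprS.
rewrite E; move: IH; set t := q ^+ m => IH.
transitivity ((1 - t) * ((1 - q) * t * gg n m.+1 + (1 - q) * t * ((1 - q * t) ^+ n - (1 - t) ^+ n))); first by ring.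
rewrite IH !exprS -addn1 natrD; ring.
Qed.

Definition psi (n : nat) (t : R) : R := \sum_(j < n) (1 - t) ^+ j.

Lemma psi_mul n t : t * psi n t = 1 - (1 - t) ^+ n.
Proof.
elim: n => [|n IH]; first by rewrite /psi big_ord0 mulr0 expr0 subrr.
rewrite /psi big_ord_recr /= mulrDr -/(psi n t) IH exprS; ring.
Qed.


Lemma B0 n (y : R) : \sum_(0 <= k < n.+1) 'C(n, k)%:R * (-1) ^+ k * y ^+ k = (1 - y) ^+ n.
Proof.
rewrite addrC exprD1n big_mkord; apply: eq_bigr => k _.
by rewrite -[(- y) ^+ k *+ _]mulr_natl (exprNn y); ring.
Qed.

Lemma B1 n (y : R) : \sum_(0 <= k < n.+2) 'C(n.+1, k)%:R * (-1) ^+ k * k%:R * y ^+ k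
  = - n.+1%:R * y * (1 - y) ^+ n.
Proof.
rewrite big_nat_recl // mulr0 mul0r add0r.
rewrite -(B0 n y) mulr_sumr.
apply: eq_bigr => k _.
have h := mul_bin_diag n.+1 k.
have h' : ('C(n.+1, k.+1)%:R * k.+1%:R : R) = n.+1%:R * 'C(n, k)%:R.
  by rewrite -!natrM mulnC -h.
transitivity (('C(n.+1, k.+1)%:R * k.+1%:R) * (-1) ^+ k.+1 * y ^+ k.+1); first by ring.
rewrite h' !exprS; ring.
Qed.

Definition fb (n : nat) (y : R) : R :=
  \sum_(2 <= k < n.+1) 'C(n, k)%:R * (-1) ^+ k * ((k.-1)%:R * y ^+ k.-1 - k%:R * y ^+ k).

Lemma F1 n (y : R) : y != 0 -> (1 <= n)%N ->
  fb n y = psi n y - n%:R * (1 - y) ^+ n - n%:R * y.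
Proof.
move=> y0; case: n => // n _.
apply: (mulfI y0).
rewrite mulrBr mulrBr psi_mul.
have E : y * fb n.+1 y = \sum_(0 <= k < n.+2) 'C(n.+1, k)%:R * (-1) ^+ k * k%:R * y ^+ k
    - \sum_(0 <= k < n.+2) 'C(n.+1, k)%:R * (-1) ^+ k * y ^+ k
    - y * \sum_(0 <= k < n.+2) 'C(n.+1, k)%:R * (-1) ^+ k * k%:R * y ^+ k
    + 1 - n.+1%:R * y ^+ 2.
  rewrite /fb mulr_sumr -sumrB mulr_sumr -sumrB.
  rewrite [in RHS]big_ltn // [in RHS]big_ltn //=.
  rewrite bin0 bin1 !expr0 !expr1 !mul1r !mulr1.
  transitivity (\sum_(2 <= i < n.+2) ('C(n.+1, i)%:R * (-1) ^+ i * i%:R * y ^+ i - 'C(n.+1, i)%:R * (-1) ^+ i * y ^+ i - y * ('C(n.+1, i)%:R * (-1) ^+ i * i%:R * y ^+ i))); last by rewrite expr2; ring.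
  rewrite big_nat [RHS]big_nat; apply: eq_bigr => i /andP[hi _].
  case: i hi => [|i] // hi.
  rewrite /= -[i.+1]addn1 natrD !exprD !expr1; ring.
rewrite E B1 (B0 n.+1 y) exprS; ring.
Qed.


Lemma gg_dec n m : q != 0 -> q != 1 ->
  gg n m.+1 = psi n (q ^+ m) - n%:R * (1 - q ^+ m) ^+ n
    + q / (1 - q) * (psi n (q ^+ m) - psi n (q ^+ m.+1))
    + ((1 - q ^+ m) ^+ n - (1 - q ^+ m.+1) ^+ n) / (1 - q).
Proof.
move=> q0 q1.
have p0 : 1 - q != 0 by rewrite subr_eq0 eq_sym.
have t0 : q ^+ m != 0 by apply: expf_neq0.
apply: (mulfI (mulf_neq0 p0 t0)).
rewrite gg_closed exprS.
set t := q ^+ m.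
set A := psi n t; set B := psi n (q * t).
transitivity ((1 - q) * (t * A) + q * (t * A) - (q * t) * B
   - n%:R * (1 - q) * t * (1 - t) ^+ n + t * ((1 - t) ^+ n - (1 - q * t) ^+ n)); last first.
  by field.
rewrite /A /B !psi_mul; ring.
Qed.

Lemma tele (a : nat -> R) M : \sum_(0 <= m < M) (a m - a m.+1) = a 0%N - a M.
Proof.
elim: M => [|M IH]; first by rewrite big_geq // subrr.
by rewrite big_nat_recr //= IH; ring.
Qed.

Lemma geom_sum (r : R) M : r != 1 -> \sum_(0 <= m < M) r ^+ m = (1 - r ^+ M) / (1 - r).
Proof.
move=> r1; have p0 : 1 - r != 0 by rewrite subr_eq0 eq_sym.
elim: M => [|M IH]; first by rewrite big_geq // expr0 subrr mul0r.
by rewrite big_nat_recr //= IH exprS; field.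
Qed.


Lemma qpow_ne1 j : 0 < q -> q < 1 -> (0 < j)%N -> q ^+ j != 1.
Proof.
move=> h0 h1 hj; rewrite lt_eqF // exprn_ilt1 ?ltW //.
by rewrite -lt0n.
Qed.

Definition SM (n M : nat) : R :=
  \sum_(2 <= k < n.+1) 'C(n, k)%:R * (-1) ^+ k *
     ((k.-1)%:R * ((1 - (q ^+ k.-1) ^+ M) / (1 - q ^+ k.-1))
      - k%:R * ((1 - (q ^+ k) ^+ M) / (1 - q ^+ k)))
  + n%:R * ((1 - q ^+ M) / (1 - q)) + q / (1 - q) * (1 - psi n (q ^+ M))
  - (1 - q ^+ M) ^+ n / (1 - q).

Lemma psi1 n : (1 <= n)%N -> psi n 1 = 1.
Proof.
case: n => // n _; rewrite /psi big_ord_recl subrr expr0 big1 ?addr0 //.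
by move=> i _; rewrite expr0n.
Qed.

Lemma S_closed n M : 0 < q -> q < 1 -> (1 <= n)%N ->
  \sum_(0 <= m < M) gg n m.+1 = SM n M.
Proof.
move=> h0 h1 hn.
have q0 : q != 0 by rewrite gt_eqF.
have q1 : q != 1 by rewrite lt_eqF.
transitivity (\sum_(0 <= m < M) ((fb n (q ^+ m) + n%:R * q ^+ m)
   + (q / (1 - q) * (psi n (q ^+ m) - psi n (q ^+ m.+1))
   + ((1 - q ^+ m) ^+ n - (1 - q ^+ m.+1) ^+ n) / (1 - q)))).
  apply: eq_bigr => m _; rewrite gg_dec // F1 //; last by apply: expf_neq0.
  ring.
rewrite big_split /= big_split /= -mulr_sumr.
rewrite big_split /= -mulr_sumr -mulr_suml.
have T1 : \sum_(0 <= i < M) (psi n (q ^+ i) - psi n (q ^+ i.+1)) = psi n (q ^+ 0) - psi n (q ^+ M).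
  exact: (tele (fun m => psi n (q ^+ m))).
have T2 : \sum_(0 <= i < M) ((1 - q ^+ i) ^+ n - (1 - q ^+ i.+1) ^+ n) = (1 - q ^+ 0) ^+ n - (1 - q ^+ M) ^+ n.
  exact: (tele (fun m => (1 - q ^+ m) ^+ n)).
rewrite T1 T2 geom_sum // expr0 psi1 // subrr expr0n.
have -> : (n == 0%N) = false by apply/negbTE; rewrite -lt0n.
rewrite /SM /fb exchange_big /=.
rewrite [X in X + _ + _ = _](_ : _ = \sum_(2 <= k < n.+1) 'C(n, k)%:R * (-1) ^+ k *
     ((k.-1)%:R * ((1 - (q ^+ k.-1) ^+ M) / (1 - q ^+ k.-1))
      - k%:R * ((1 - (q ^+ k) ^+ M) / (1 - q ^+ k)))); first by ring.
rewrite big_nat [RHS]big_nat; apply: eq_bigr => k /andP[hk _].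
rewrite -mulr_sumr; congr (_ * _).
rewrite sumrB -!mulr_sumr.
have E j : \sum_(0 <= i < M) (q ^+ i) ^+ j = \sum_(0 <= i < M) (q ^+ j) ^+ i.
  by apply: eq_bigr => i _; rewrite exprAC.
rewrite !E.
rewrite !geom_sum //; apply: qpow_ne1 => //.
  by case: k hk => // [[]].
by case: k hk.
Qed.


Lemma u_ge0 m : 0 <= q -> q <= 1 -> 0 <= u m.
Proof. by move=> h0 h1; rewrite /u subr_ge0 exprn_ile1. Qed.

Lemma V_ge0 m : 0 <= q -> q <= 1 -> 0 <= V m.
Proof. by move=> h0 h1; rewrite /V subr_ge0 exprn_ile1. Qed.

Lemma om_ge0 n m : 0 <= q -> q <= 1 -> 0 <= om n m.
Proof.
move=> h0 h1; rewrite /om; case: m => [|m].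
  by rewrite subr0 exprn_ge0 // V_ge0.
rewrite subr_ge0 lerXn2r //.
- by rewrite nnegrE V_ge0.
- by rewrite nnegrE V_ge0.
by rewrite /V lerD2l lerN2 (ler_wiXn2l h0 h1).
Qed.

Lemma gg_ge0 n m : 0 <= q -> q <= 1 -> 0 <= gg n m.
Proof.
move=> h0 h1; elim: n => [|n IH] //=.
by rewrite mulr_ge0 ?u_ge0 // addr_ge0 // om_ge0.
Qed.

Lemma box_sum n M : \sum_(w <- words n M) Pw w * (idx w)%:R = \sum_(0 <= m < M) gg n m.+1.
Proof.
have := sum_idx n M (fun _ => 1).
under eq_bigr do rewrite mulr1.
move=> ->; rewrite big_ord_recl gg0 mul1r add0r big_mkord.
by apply: eq_bigr => i _; rewrite mul1r.
Qed.


Definition Tval (n : nat) : R :=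
  \sum_(2 <= k < n.+1) 'C(n, k)%:R * (-1) ^+ k *
     ((k.-1)%:R / (q^-1 ^+ k.-1 - 1) - k%:R / (q^-1 ^+ k - 1)).

Definition Lval (n : nat) : R :=
  \sum_(2 <= k < n.+1) 'C(n, k)%:R * (-1) ^+ k *
     ((k.-1)%:R * ((1 - 0) / (1 - q ^+ k.-1)) - k%:R * ((1 - 0) / (1 - q ^+ k)))
  + n%:R * ((1 - 0) / (1 - q)) + q / (1 - q) * (1 - psi n 0) - (1 - 0) ^+ n / (1 - q).

Lemma psi0 n : psi n 0 = n%:R.
Proof.
by rewrite /psi subr0 (eq_bigr (fun _ => 1)) ?sumr_const ?card_ord // => i _; rewrite expr1n.
Qed.

Lemma sum_sign n : (1 <= n)%N -> \sum_(2 <= k < n.+1) 'C(n, k)%:R * (-1) ^+ k = n%:R - 1 :> R.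
Proof.
move=> hn; have := B0 n 1; rewrite subrr expr0n.
have -> : (n == 0%N) = false by apply/negbTE; rewrite -lt0n.
rewrite big_ltn // big_ltn ?ltnS // bin0 bin1 expr0 expr1 !expr1n !mulr1.
under eq_bigr do rewrite expr1n mulr1.
move=> h; apply/eqP; rewrite -subr_eq0; apply/eqP.
rewrite -[RHS](_ : false%:R = 0) // -h; ring.
Qed.

Lemma L_eq_T n : 0 < q -> q < 1 -> (1 <= n)%N -> Lval n = Tval n.
Proof.
move=> h0 h1 hn.
have q0 : q != 0 by rewrite gt_eqF.
have p0 : 1 - q != 0 by rewrite subr_eq0 eq_sym lt_eqF.
have key j : (0 < j)%N -> j%:R * (1 / (1 - q ^+ j)) = j%:R / (q^-1 ^+ j - 1) + j%:R.
  move=> hj.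
  have qj0 : q ^+ j != 0 by apply: expf_neq0.
  have qj1 : 1 - q ^+ j != 0 by rewrite subr_eq0 eq_sym qpow_ne1.
  rewrite exprVn; field.
  by rewrite qj0 mulN1r.
rewrite /Lval /Tval psi0 !subr0 expr1n.
transitivity (\sum_(2 <= k < n.+1) ('C(n, k)%:R * (-1) ^+ k *
     ((k.-1)%:R / (q^-1 ^+ k.-1 - 1) - k%:R / (q^-1 ^+ k - 1)) - 'C(n, k)%:R * (-1) ^+ k)
   + n%:R * (1 / (1 - q)) + q / (1 - q) * (1 - n%:R) - 1 / (1 - q)).
  congr (_ + _ + _ - _); rewrite big_nat [RHS]big_nat; apply: eq_bigr => k /andP[hk _].
  case: k hk => // [[]] // k _.
  rewrite !key //= [k.+2%:R]mulrSr; ring.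
by rewrite sumrB sum_sign //; field.
Qed.


Lemma mem_words n M w :
  (w \in words n M) = (size w == n) && all (fun a => (0 < a <= M)%N) w.
Proof.
elim: n w => [|n IH] w.
  by case: w => [|x w] //=; rewrite inE.
case: w => [|x w] /=.
  by apply/negbTE/negP => /allpairsPdep[x [w' [_ [_]]]].
apply/allpairsPdep/idP.
  move=> [x' [w' [hx hw [-> ->]]]].
  move: hw; rewrite IH => /andP[/eqP -> ->]; rewrite eqxx /= andbT.
  by move: hx; rewrite mem_iota add1n ltnS.
move=> /andP[/eqP [hs] /andP[hx hw]]; exists x, w; split => //.
  by rewrite mem_iota add1n ltnS.
by rewrite IH hs eqxx hw.
Qed.

Lemma uniq_words n M : uniq (words n M).
Proof.
elim: n => [|n IH] //=.
apply: allpairs_uniq => //; first exact: iota_uniq.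
by move=> [x1 w1] [x2 w2] _ _ /= [-> ->].
Qed.

End Fin.

Local Open Scope classical_set_scope.

Section Ana.
Variable R : realType.

Lemma cvg_sum_seq (I : eqType) (r : seq I) (F : I -> nat -> R) (L : I -> R) :
  (forall i, i \in r -> (F i) @ \oo --> L i) ->
  (fun M => \sum_(i <- r) F i M) @ \oo --> \sum_(i <- r) L i.
Proof.
elim: r => [|i r IH] h.
  rewrite big_nil; under eq_cvg do rewrite big_nil; exact: cvg_cst.
rewrite big_cons; under eq_cvg do rewrite big_cons.
apply: cvgD; first by apply: h; rewrite mem_head.
by apply: IH => j hj; apply: h; rewrite inE hj orbT.
Qed.

Lemma cvgXn (f : nat -> R) (a : R) k : f @ \oo --> a -> (fun M => f M ^+ k) @ \oo --> a ^+ k.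
Proof.
move=> h; elim: k => [|k IH].
  rewrite expr0; under eq_cvg do rewrite expr0; exact: cvg_cst.
rewrite exprS; under eq_cvg do rewrite exprS.
exact: cvgM.
Qed.

Lemma cvg_pow (r : R) : 0 <= r -> r < 1 -> (fun M => r ^+ M) @ \oo --> 0.
Proof. by move=> h0 h1; apply: cvg_expr; rewrite ger0_norm. Qed.

Lemma SM_cvg (q : R) n : 0 < q -> q < 1 -> (fun M => SM R q n M) @ \oo --> Lval R q n.
Proof.
move=> h0 h1.
have hp j : (0 < j)%N -> (fun M => (q ^+ j) ^+ M) @ \oo --> 0.
  move=> hj; apply: cvg_pow; first by rewrite exprn_ge0 // ltW.
  by rewrite exprn_ilt1 ?ltW // -lt0n.
have hpsi : (fun M => psi R n (q ^+ M)) @ \oo --> psi R n 0.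
  rewrite /psi; apply: cvg_sum_seq => j _.
  apply: cvgXn; apply: cvgB; first exact: cvg_cst.
  have := hp 1%N isT; under eq_cvg do rewrite expr1; by [].
rewrite /SM /Lval.
apply: cvgB; last first.
  apply: cvgM; last exact: cvg_cst.
  apply: cvgXn; apply: cvgB; first exact: cvg_cst.
  have := hp 1%N isT; under eq_cvg do rewrite expr1; by [].
apply: cvgD; last first.
  apply: cvgM; first exact: cvg_cst.
  by apply: cvgB; first exact: cvg_cst.
apply: cvgD; last first.
  apply: cvgM; first exact: cvg_cst.
  apply: cvgM; last exact: cvg_cst.
  apply: cvgB; first exact: cvg_cst.
  have := hp 1%N isT; under eq_cvg do rewrite expr1; by [].
apply: cvg_sum_seq => k; rewrite mem_index_iota => /andP[hk _].
apply: cvgM; first exact: cvg_cst.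
apply: cvgB; (apply: cvgM; first exact: cvg_cst); (apply: cvgM; last exact: cvg_cst);
  (apply: cvgB; first exact: cvg_cst); apply: hp.
  by case: k hk => // [[]].
by case: k hk.
Qed.


Definition W (n : nat) : set (seq nat) := [set s | size s = n /\ all (fun a => (0 < a)%N) s].

Lemma F_exp_W (q : R) n : F_exp q n = \esum_(s in W n) (Pw R q s * (idx s)%:R)%:E.
Proof.
rewrite /F_exp (reindex_esum (@pos_word n) (W n) (fun t : n.-tuple nat => tval t)).
  by apply: eq_esum => t _.
split.
- by move=> t /= ht; split; [exact: size_tuple | exact: ht].
- by move=> t1 t2 _ _; apply: val_inj.
- move=> s [hs ha]; have hs' : size s == n by rewrite hs.
  by exists (Tuple hs').
Qed.


Lemma esum_W (q : R) n : 0 < q -> q < 1 -> (1 <= n)%N ->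
  \esum_(s in W n) (Pw R q s * (idx s)%:R)%:E = (Lval R q n)%:E.
Proof.
move=> h0 h1 hn.
have f0 s : (0 <= (Pw R q s * (idx s)%:R)%:E)%E.
  rewrite lee_fin mulr_ge0 // /Pw; apply: prodr_ge0 => a _.
  rewrite /wt mulr_ge0 //; [by rewrite subr_ge0 ltW | by rewrite exprn_ge0 // ltW].
pose S M := \sum_(0 <= m < M) gg R q n m.+1.
have Scvg : S @ \oo --> Lval R q n.
  have -> : S = SM R q n by apply: funext => M; rewrite /S S_closed.
  exact: SM_cvg.
have Snd : nondecreasing_seq S.
  apply/nondecreasing_seqP => M; rewrite /S big_nat_recr //= lerDl.
  by apply: gg_ge0; rewrite ltW.
have Sle M : S M <= Lval R q n.
  have := nondecreasing_cvgn_le Snd (cvgP _ Scvg) M.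
  by rewrite (cvg_lim _ Scvg).
have box M : (\sum_(s \in [set` words n M]) (Pw R q s * (idx s)%:R)%:E)%E = (S M)%:E.
  by rewrite -fsbig_seq ?uniq_words // sumEFin box_sum.
have sub M : [set` words n M] `<=` W n.
  move=> s /=; rewrite mem_words => /andP[/eqP hs ha]; split => //.
  by apply: sub_all ha => a /andP[].
apply/eqP; rewrite eq_le; apply/andP; split.
  apply: ge_ereal_sup => _ [X [finX XW] <-].
  pose M := (\max_(s <- (finmap.enum_fset (fset_set X))) \max_(a <- s) a)%N.
  have XM : {subset X <= [set` words n M]}.
    move=> s; rewrite inE => Xs; rewrite inE /= mem_words.
    have [hs ha] := XW s Xs.
    rewrite hs eqxx /=; apply/allP => a ha'; move/allP: ha => /(_ a ha') -> /=.
    have h1' : (a <= \max_(a <- s) a)%N.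
      by apply: (@leq_bigmax_seq _ s xpredT (fun a => a) a).
    apply: (leq_trans h1').
    apply: (@leq_bigmax_seq _ _ xpredT (fun s => \max_(a <- s) a)%N s) => //.
    by rewrite in_fset_set // inE.
  apply: le_trans (lee_fsum_nneg_subset finX (finite_seq _) XM _) _.
    by move=> s _; apply: f0.
  by rewrite box lee_fin.
have h M : ((S M)%:E <= \esum_(s in W n) (Pw R q s * (idx s)%:R)%:E)%E.
  rewrite -box; apply: esum_ge; exists [set` words n M] => //.
  by split; [exact: finite_seq | exact: sub].
move: h; case: (\esum_(s in W n) _) => [r| |] h.
- rewrite lee_fin; apply: (ler_cvg_to Scvg (cvg_cst r)).
  by apply: nearW => M; rewrite -lee_fin h.
- by rewrite leey.
- by have := h 0%N; rewrite leeNy_eq.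
Qed.

End Ana.


Theorem mainTheorem5 (R : realType) (q : R) (n : nat) :
  0 < q -> q < 1 -> (2 <= n)%N ->
  F_exp q n =
  (\sum_(2 <= k < n.+1)
     'C(n, k)%:R * (-1) ^+ k *
     ((k.-1)%:R / (q^-1 ^+ k.-1 - 1) - k%:R / (q^-1 ^+ k - 1)))%:E.
Proof.
move=> h0 h1 hn.
have hn1 : (1 <= n)%N by apply: ltnW.
rewrite F_exp_W esum_W // L_eq_T //.
Qed.
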